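(* Let $g\in\mathbb{Q}[x_1,\dots,x_n]$ be a monic polynomial, and let $g=\prod_{i=1}^m h_i$ be a factorization of $g$ over $\mathbb{Q}$ in which every $h_i\in\mathbb{Q}[x_1,\dots,x_n]$ is monic. Let $N>0$ be the least common multiple of the denominators of the coefficients of $g$. Then for every $i=1,\dots,m$, $N$ is an upper bound for the absolute values of the denominators of the coefficients of $h_i$.
   Context: A fixed monomial order on $\mathbb{Q}[x_1,\dots,x_n]$ is used; a polynomial is monic if its leading coefficient with respect to this order is $1$. Denominators of rational coefficients are taken with the fractions in lowest terms. *)

(* Defs.v *)
From mathcomp Require Import all_boot all_order all_algebra.
From mathcomp Require Export mpoly.
Set Implicit Arguments. Unset Strict Implicit. Unset Printing Implicit Defensive.
Import Order.TTheory GRing.Theory Num.Theory.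
Local Open Scope ring_scope.

(* A monomial order on 'X_{1..n}: a total order, compatible with
   multiplication of monomials (addition of exponents), with 1 = 0%MM
   minimal (hence a well-order by Dickson's lemma). *)
Definition monomial_order (n : nat) (le : rel 'X_{1..n}) : Prop :=
  [/\ reflexive le, antisymmetric le, transitive le, total le &
      (forall a b c : 'X_{1..n}, le a b -> le (a + c)%MM (b + c)%MM)]
  /\ (forall m : 'X_{1..n}, le 0%MM m).

Definition monic_wrt (n : nat) (le : rel 'X_{1..n}) (p : {mpoly rat[n]}) : Prop :=
  exists2 m : 'X_{1..n}, m \in msupp p &
    p@_m = 1 /\ (forall m' : 'X_{1..n}, m' \in msupp p -> le m' m).

Definition denom (c : rat) : nat := absz (denq c).

Definition lcm_denoms (n : nat) (p : {mpoly rat[n]}) : nat :=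
  \big[lcmn/1%N]_(m <- msupp p) denom p@_m.

(* Main.v *)
Require Import Defs.
From mathcomp Require Import all_boot all_order all_algebra.
From mathcomp Require Import mpoly.
From mathcomp Require Import ring lra zify.
Import Order.TTheory GRing.Theory Num.Theory.
Local Open Scope ring_scope.

Definition lv (p : nat) (u : int) : nat := logn p `|u|.
Definition vq p (x : rat) : int := (lv p (numq x))%:Z - (lv p (denq x))%:Z.
Definition vge p (k : int) (x : rat) : bool := (x == 0) || (k <= vq p x).

Lemma lvM p u w : u != 0 -> w != 0 -> lv p (u*w) = (lv p u + lv p w)%N.
Proof. by move=> u0 w0; rewrite /lv abszM lognM // absz_gt0. Qed.

Lemma dvd_lv p t u : prime p -> ((p ^ t)%:Z %| u)%Z = (u == 0) || (t <= lv p u)%N.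
Proof.
move=> pp; have [->|u0] /= := eqVneq u 0; first by rewrite dvdz0.
by rewrite /dvdz /lv /= unfold_in pfactor_dvdn // absz_gt0.
Qed.

Lemma frac_rel (a b : int) : b != 0 ->
  numq (a%:~R / b%:~R : rat) * b = a * denq (a%:~R / b%:~R : rat).
Proof.
move=> b0; set x := (a%:~R / b%:~R : rat).
apply: (@intr_inj rat); rewrite !rmorphM /= numqE /x.
have b0' : (b%:~R : rat) != 0 by rewrite intr_eq0.
by field.
Qed.

Lemma vq_frac p (a b : int) : a != 0 -> b != 0 ->
  vq p (a%:~R / b%:~R) = (lv p a)%:Z - (lv p b)%:Z.
Proof.
move=> a0 b0; have := @frac_rel a b b0; set x := (_ / _ : rat) => e.
have x0 : numq x != 0.
  by rewrite numq_eq0 /x mulf_eq0 invr_eq0 !intr_eq0 negb_or a0 b0.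
have := congr1 (lv p) e; rewrite !lvM ?denq_neq0 // => e'.
rewrite /vq; apply/eqP; rewrite subr_eq addrC addrA eq_sym subr_eq -!PoszD.
by rewrite addnC e' addnC.
Qed.

Lemma ratE (x : rat) : x = (numq x)%:~R / (denq x)%:~R.
Proof. by rewrite divq_num_den. Qed.

Lemma vqM p (x y : rat) : x != 0 -> y != 0 -> vq p (x * y) = vq p x + vq p y.
Proof.
move=> x0 y0.
have -> : x * y = (numq x * numq y)%:~R / (denq x * denq y)%:~R.
  by rewrite !rmorphM /= {1}[x]ratE {1}[y]ratE mulrACA invfM.
have nx : numq x != 0 by rewrite numq_eq0.
have ny : numq y != 0 by rewrite numq_eq0.
rewrite vq_frac ?mulf_neq0 ?denq_neq0 // !lvM ?denq_neq0 // /vq !PoszD.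
lia.
Qed.

Lemma vqN p (x : rat) : vq p (- x) = vq p x.
Proof. by rewrite /vq numqN denqN /lv abszN. Qed.

Lemma vq1 p : vq p 1 = 0.
Proof. by rewrite /vq /lv /= logn1. Qed.

Lemma vq_add p (k : int) (x y : rat) : prime p -> x + y != 0 -> x != 0 -> y != 0 ->
  k <= vq p x -> k <= vq p y -> k <= vq p (x + y).
Proof.
move=> pp s0 x0 y0.
have nx : numq x != 0 by rewrite numq_eq0.
have ny : numq y != 0 by rewrite numq_eq0.
have E : x + y = (numq x * denq y + numq y * denq x)%:~R / (denq x * denq y)%:~R.
  rewrite rmorphD !rmorphM /= {1}[x]ratE {1}[y]ratE.
  have dx : ((denq x)%:~R : rat) != 0 by rewrite intr_eq0 denq_neq0.
  have dy : ((denq y)%:~R : rat) != 0 by rewrite intr_eq0 denq_neq0.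
  by rewrite addf_div.
have S0 : numq x * denq y + numq y * denq x != 0.
  by apply: contra s0; rewrite E => /eqP ->; rewrite mul0r.
rewrite E vq_frac ?mulf_neq0 ?denq_neq0 // !lvM ?denq_neq0 // /vq.
move=> hx hy.
case: (ltP (k + (lv p (denq x))%:Z + (lv p (denq y))%:Z) 0) => ht; first by lia.
have [tn Ht] : exists tn : nat, k + (lv p (denq x))%:Z + (lv p (denq y))%:Z = tn%:Z.
  by exists (absz (k + (lv p (denq x))%:Z + (lv p (denq y))%:Z)); rewrite gez0_abs.
have d1 : ((p ^ tn)%:Z %| numq x * denq y)%Z.
  rewrite dvd_lv // lvM ?denq_neq0 //; apply/orP; right; lia.
have d2 : ((p ^ tn)%:Z %| numq y * denq x)%Z.
  rewrite dvd_lv // lvM ?denq_neq0 //; apply/orP; right; lia.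
have H : (tn <= lv p (numq x * denq y + numq y * denq x))%N.
  by have := rpredD d1 d2; rewrite dvd_lv // (negbTE S0).
move: H Ht; rewrite PoszD; generalize (lv p (numq x * denq y + numq y * denq x)) (lv p (denq x)) (lv p (denq y)) => a b c; lia.
Qed.

Lemma dvdn_from_log m n : (0 < m)%N -> (0 < n)%N ->
  (forall p, prime p -> (logn p m <= logn p n)%N) -> (m %| n)%N.
Proof.
move=> m0 n0 H.
have E : gcdn m n = m.
  apply: eqn_from_log => //; first by rewrite gcdn_gt0 m0.
  move=> p /=; case pp: (prime p); last by rewrite [LHS]lognE [RHS]lognE pp.
  by rewrite logn_gcd //; apply/minn_idPl/H.
by rewrite -E dvdn_gcdr.
Qed.

Lemma vge0 p k : vge p k 0.
Proof. by rewrite /vge eqxx. Qed.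

Lemma vgeD p k (x y : rat) : prime p -> vge p k x -> vge p k y -> vge p k (x + y).
Proof.
move=> pp; have [->|x0] := eqVneq x 0; first by rewrite add0r.
have [->|y0] := eqVneq y 0; first by rewrite addr0.
rewrite /vge (negbTE x0) (negbTE y0) /= => hx hy.
have [->|s0] := eqVneq (x + y) 0; first by [].
by rewrite /= vq_add.
Qed.

Lemma vge_sum p k (I : Type) (r : seq I) (P : pred I) (F : I -> rat) : prime p ->
  (forall i, P i -> vge p k (F i)) -> vge p k (\sum_(i <- r | P i) F i).
Proof.
move=> pp H; apply: (big_ind (vge p k)); [exact: vge0| |exact: H].
by move=> x y; apply: vgeD.
Qed.

Lemma vgeM p k1 k2 (x y : rat) : vge p k1 x -> vge p k2 y -> vge p (k1 + k2) (x * y).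
Proof.
have [->|x0] := eqVneq x 0; first by rewrite mul0r vge0.
have [->|y0] := eqVneq y 0; first by rewrite mulr0 vge0.
rewrite /vge (negbTE x0) (negbTE y0) mulf_eq0 (negbTE x0) (negbTE y0) /= vqM //.
by move=> h1 h2; apply: lerD.
Qed.

Lemma vge_strict p V (x y : rat) : prime p -> x != 0 -> vq p x = V -> vge p (V + 1) y ->
  x + y != 0 /\ vq p (x + y) = V.
Proof.
move=> pp x0 xV; have [->|y0] := eqVneq y 0; first by rewrite addr0.
rewrite /vge (negbTE y0) /= => hy.
have s0 : x + y != 0.
  apply/negP => /eqP e; have : y = - x by apply/eqP; rewrite -addr_eq0 addrC e.
  by move=> ey; move: hy; rewrite ey vqN xV; lia.
split => //.
have h1 : V <= vq p (x + y) by apply: vq_add => //; lia.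
have : ~~ (V + 1 <= vq p (x + y)).
  apply/negP => h2.
  have : V + 1 <= vq p ((x + y) + - y).
    by apply: vq_add => //; rewrite ?oppr_eq0 ?vqN ?addrK //.
  by rewrite addrK xV; lia.
lia.
Qed.

Definition MV p {n} (F : {mpoly rat[n]}) (w : int) : Prop :=
  (exists2 m, m \in msupp F & vq p (F@_m) = w) /\
  (forall m, m \in msupp F -> w <= vq p (F@_m)).

Lemma seq_min {T : eqType} (f : T -> int) {s : seq T} :
  s != [::] -> exists2 x, x \in s & forall y, y \in s -> f x <= f y.
Proof.
elim: s => // a s IH _; have [->|ns] := eqVneq s [::].
  by exists a; rewrite ?mem_head // => y; rewrite inE => /eqP->.
have [x xs H] := IH ns; have [h|h] := lerP (f a) (f x).
  exists a; rewrite ?mem_head // => y; rewrite inE => /orP[/eqP->//|/H].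
  exact: le_trans.
exists x; first by rewrite inE xs orbT.
by move=> y; rewrite inE => /orP[/eqP->|/H//]; apply: ltW.
Qed.

Lemma seq_max {T : eqType} {le : rel T} {s : seq T} : transitive le -> total le ->
  s != [::] -> exists2 x, x \in s & forall y, y \in s -> le y x.
Proof.
move=> tr tot; elim: s => // a s IH _; have [->|ns] := eqVneq s [::].
  exists a; rewrite ?mem_head // => y; rewrite inE => /eqP->.
  by have := tot a a; rewrite orbb.
have [x xs H] := IH ns; have /orP[h|h] := tot a x.
  exists x; first by rewrite inE xs orbT.
  by move=> y; rewrite inE => /orP[/eqP->//|/H].
exists a; rewrite ?mem_head // => y; rewrite inE => /orP[/eqP->|/H hy].
  by have := tot a a; rewrite orbb.
exact: tr hy h.
Qed.

Lemma MV_exists p n (F : {mpoly rat[n]}) m : m \in msupp F -> exists w, MV p F w.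
Proof.
move=> mF; have ne : msupp F != [::] by apply: contraTneq mF => ->.
have [x xs H] := seq_min (fun m => vq p (F@_m)) ne.
by exists (vq p (F@_x)); split => //; exists x.
Qed.

Lemma MV_pick {p n} {le : rel 'X_{1..n}} {F : {mpoly rat[n]}} {w} :
  transitive le -> total le -> MV p F w ->
  exists a, [/\ a \in msupp F, vq p (F@_a) = w &
     forall m, m \in msupp F -> vq p (F@_m) = w -> le m a].
Proof.
move=> tr tot [[m0 m0S m0w] _].
set s := [seq m <- msupp F | vq p (F@_m) == w].
have ne : s != [::].
  apply/eqP => e; have : m0 \in s by rewrite mem_filter m0w eqxx m0S.
  by rewrite e.
have [a aS H] := seq_max tr tot ne.
move: aS; rewrite mem_filter => /andP[/eqP aw aS].
exists a; split => // m mS mw; apply: H; by rewrite mem_filter mw eqxx mS.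
Qed.

Lemma mcoeffM2 n (F G : {mpoly rat[n]}) m :
  (F * G)@_m = \sum_(x <- [seq (x1, x2) | x1 <- msupp F, x2 <- msupp G])
     (F@_x.1 * G@_x.2) * ((x.1 + x.2 == m)%MM%:R).
Proof.
rewrite {1}mpolyME raddf_sum; apply: eq_bigr => x _.
have := mcoeffZ (F@_x.1 * G@_x.2) ('X_[(x.1 + x.2)%MM]) m.
rewrite mcoeffX => <-. reflexivity.
Qed.

Lemma MV_mul p n (le : rel 'X_{1..n}) (F G : {mpoly rat[n]}) (w1 w2 : int) :
  prime p -> monomial_order le -> MV p F w1 -> MV p G w2 -> MV p (F * G) (w1 + w2).
Proof.
move=> pp [[rfl atl tr tot comp] _] MF MG.
have [a [aS aw amax]] := MV_pick tr tot MF.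
have [b [bS bw bmax]] := MV_pick tr tot MG.
have Fmin := MF.2; have Gmin := MG.2.
have allge : forall m, vge p (w1 + w2) ((F * G)@_m).
  move=> m; rewrite mcoeffM2 big_seq; apply: vge_sum => // x.
  case/allpairsP => [[y1 y2] [h1 h2 ->]] /=.
  case: (_ == m); rewrite ?mulr1 ?mulr0 ?vge0 //.
  by apply: vgeM; rewrite /vge ?Fmin ?Gmin ?orbT.
have key : (F * G)@_(a + b)%MM != 0 /\ vq p ((F * G)@_(a + b)%MM) = w1 + w2.
  rewrite mcoeffM2 (bigD1_seq (a, b)) /=; first last.
  - rewrite allpairs_uniq ?msupp_uniq //.
    by move=> [x1 x2] [y1 y2] _ _ /= [-> ->].
  - by apply/allpairsP; exists (a, b).
  have Fa : F@_a != 0 by rewrite -mcoeff_msupp.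
  have Gb : G@_b != 0 by rewrite -mcoeff_msupp.
  apply: vge_strict => //.
  - by rewrite eqxx mulr1 mulf_neq0.
  - by rewrite eqxx mulr1 vqM // aw bw.
  rewrite big_seq_cond; apply: vge_sum => // -[x1 x2].
  case/andP => /allpairsP [[y1 y2] [h1 h2 [-> ->]]] ne /=.
  case: eqP => [e|_]; last by rewrite mulr0 vge0.
  rewrite mulr1.
  have F1 : F@_y1 != 0 by rewrite -mcoeff_msupp.
  have G2 : G@_y2 != 0 by rewrite -mcoeff_msupp.
  rewrite /vge mulf_eq0 (negbTE F1) (negbTE G2) /= vqM //.
  have f1 := Fmin y1 h1; have g2 := Gmin y2 h2.
  have [e1|n1] := eqVneq (vq p (F@_y1)) w1; last first.
    have : w1 < vq p (F@_y1) by rewrite lt_neqAle eq_sym n1 f1.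
    lia.
  have [e2|n2] := eqVneq (vq p (G@_y2)) w2; last first.
    have : w2 < vq p (G@_y2) by rewrite lt_neqAle eq_sym n2 g2.
    lia.
  exfalso; move: ne; apply/negP; rewrite negbK.
  have l1 := amax y1 h1 e1; have l2 := bmax y2 h2 e2.
  have c1 : le (a + b)%MM (a + y2)%MM by rewrite -e; apply: comp.
  have c2 : le (a + y2)%MM (a + b)%MM.
    by rewrite ![(a + _)%MM]addmC; apply: comp.
  have E2 : (a + y2)%MM = (a + b)%MM by apply: atl; rewrite c1 c2.
  have eb : y2 = b by apply: (addmI E2).
  have ea : y1 = a by move: e; rewrite eb => /addIm.
  by rewrite ea eb.
case: key => k0 kv; split; first by exists (a + b)%MM; rewrite ?mcoeff_msupp.
move=> m; rewrite mcoeff_msupp => m0; have := allge m.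
by rewrite /vge (negbTE m0).
Qed.

Lemma MV_one p n : MV p (1 : {mpoly rat[n]}) 0.
Proof.
split; first by exists 0%MM; rewrite ?msupp1 ?mem_seq1 // mcoeff1 eqxx vq1.
by move=> m; rewrite msupp1 mem_seq1 => /eqP->; rewrite mcoeff1 eqxx vq1.
Qed.

Lemma MV_prod p n (le : rel 'X_{1..n}) k (h : 'I_k -> {mpoly rat[n]}) (w : 'I_k -> int) :
  prime p -> monomial_order le -> (forall i, MV p (h i) (w i)) ->
  MV p (\prod_(i < k) h i) (\sum_(i < k) w i).
Proof.
move=> pp mo; elim: k h w => [|k IH] h w H; first by rewrite !big_ord0; apply: MV_one.
rewrite !big_ord_recl; apply: MV_mul pp mo (H _) _.
exact: IH (fun i => h (lift ord0 i)) (fun i => w (lift ord0 i)) (fun i => H _).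
Qed.

Lemma denom_gt0 c : (0 < denom c)%N.
Proof. by rewrite /denom absz_gt0 denq_neq0. Qed.

Lemma lcm_gt0 {n} (g : {mpoly rat[n]}) : (0 < lcm_denoms g)%N.
Proof.
rewrite /lcm_denoms; apply: (big_ind (fun x => 0 < x)%N) => //.
  by move=> x y x0 y0; rewrite lcmn_gt0 x0 y0.
by move=> m _; apply: denom_gt0.
Qed.

Lemma in_lcm {n} {g : {mpoly rat[n]}} {m} : m \in msupp g -> (denom g@_m %| lcm_denoms g)%N.
Proof. by move=> H; rewrite /lcm_denoms (big_rem m H) /= dvdn_lcml. Qed.

Lemma logden p (c : rat) : prime p -> c != 0 ->
  logn p (denom c) = 0%N \/ vq p c = - (logn p (denom c))%:Z.
Proof.
move=> pp c0; rewrite /vq /lv /denom.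
case: (posnP (logn p `|denq c|)) => [->|h]; first by left.
right; have : (p %| `|denq c|)%N by move: h; rewrite logn_gt0 mem_primes => /and3P[].
move=> pd.
have -> : logn p `|numq c| = 0%N.
  apply: logn_coprime; rewrite prime_coprime //; apply/negP => pn.
  have := coprime_num_den c; rewrite /coprime => /eqP g1.
  have : (p %| gcdn `|numq c| `|denq c|)%N by rewrite dvdn_gcd pn pd.
  by rewrite g1 Euclid_dvd1.
by rewrite sub0r.
Qed.

Lemma vq_den p (c : rat) : - (logn p (denom c))%:Z <= vq p c.
Proof. rewrite /vq /denom /lv; lia. Qed.

Theorem theorem6 (n : nat) (le : rel 'X_{1..n}) (g : {mpoly rat[n]})
    (k : nat) (h : 'I_k -> {mpoly rat[n]}) :
  monomial_order le ->
  monic_wrt le g ->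
  (forall i, monic_wrt le (h i)) ->
  g = \prod_(i < k) h i ->
  (0 < lcm_denoms g)%N /\
  forall (i : 'I_k) (m : 'X_{1..n}), m \in msupp (h i) ->
    (denom (h i)@_m <= lcm_denoms g)%N.
Proof.
move=> mo _ hm gE; split; first exact: lcm_gt0.
move=> i m mi; apply: dvdn_leq; first exact: lcm_gt0.
apply: dvdn_from_log; [exact: denom_gt0 | exact: lcm_gt0 |] => p pp.
have /fin_all_exists [w Hw] : forall j, exists w, MV p (h j) w.
  by move=> j; have [mj mjS _] := hm j; apply: MV_exists mjS.
have MVg := @MV_prod p n le k h w pp mo Hw; rewrite -gE in MVg.
have wle0 : forall j, w j <= 0.
  move=> j; have [mj mjS [mj1 _]] := hm j.
  by have := (Hw j).2 mj mjS; rewrite mj1 vq1.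
have Wle : \sum_(j < k) w j <= w i.
  rewrite (bigD1 i) //= gerDl.
  by apply: (big_ind (fun x : int => x <= 0)) => // x y; lia.
have ci : \sum_(j < k) w j <= vq p ((h i)@_m).
  exact: le_trans Wle ((Hw i).2 m mi).
have [m' m'S m'W] := MVg.1.
have L1 := dvdn_leq_log p (lcm_gt0 g) (in_lcm m'S).
have L2 := vq_den p (g@_m').
have c0 : (h i)@_m != 0 by rewrite -mcoeff_msupp.
have := wle0 i.
case: (logden p _ pp c0) => [->|E]; lia.
Qed.
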